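(* For all $n\ge1$, \[a_n(132,\emptyset,\{3\})=a_n(132,\emptyset,\{1,3\})=\sum_{k=1}^{n}(k-1)!\,(n-k)!.\]
   Context: For $n\ge1$, $\mathcal S_n$ is the set of permutations $\pi=\pi_1\cdots\pi_n$ of $[n]$. A bi-vincular pattern of length $k$ is a triple $p=(\sigma,X,Y)$ with $\sigma\in\mathcal S_k$ and $X,Y\subseteq\{0,1,\dots,k\}$. A permutation $\pi\in\mathcal S_n$ contains $p$ if there are indices $1\le i_1<\dots<i_k\le n$ such that $(\pi_{i_1},\dots,\pi_{i_k})$ is order-isomorphic to $\sigma$ and, letting $j_1<\dots<j_k$ be the values $\pi_{i_1},\dots,\pi_{i_k}$ sorted increasingly and setting $i_0=j_0=0$, $i_{k+1}=j_{k+1}=n+1$, one has $i_{x+1}=i_x+1$ for all $x\in X$ and $j_{y+1}=j_y+1$ for all $y\in Y$. Otherwise $\pi$ avoids $p$; $a_n(p)$ is the number of $\pi\in\mathcal S_n$ avoiding $p$. *)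

(* Defs.v *)
From mathcomp Require Import all_boot all_fingroup.
Set Implicit Arguments. Unset Strict Implicit. Unset Printing Implicit Defensive.

(* Permutations of [n] are modelled as 'S_n = {perm 'I_n}; position p (0-based)
   corresponds to position p+1, value v (0-based) to value v+1. *)

Record bivinc (k : nat) := BiVinc {
  bv_sigma : 'S_k;
  bv_X : {set 'I_k.+1};
  bv_Y : {set 'I_k.+1} }.

Section Contain.
Variables (n k : nat).

(* i_x with i_0 = 0, i_{k+1} = n+1, and i_x (1<=x<=k) the 1-based position *)
Definition ext_pos (idx : 'I_k -> 'I_n) (x : nat) : nat :=
  if x == 0 then 0
  else if x <= k then nth 0 [seq (nat_of_ord (idx a)).+1 | a <- enum 'I_k] x.-1
  else n.+1.

(* j_y: the values pi_{i_1},...,pi_{i_k} (1-based) sorted increasingly,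
   with j_0 = 0 and j_{k+1} = n+1 *)
Definition ext_val (pi : 'S_n) (idx : 'I_k -> 'I_n) (y : nat) : nat :=
  let vals := sort leq [seq (nat_of_ord (pi (idx a))).+1 | a <- enum 'I_k] in
  if y == 0 then 0
  else if y <= k then nth 0 vals y.-1 else n.+1.

Definition occurrence (pi : 'S_n) (p : bivinc k) (idx : 'I_k -> 'I_n) : bool :=
  [&& [forall a : 'I_k, forall b : 'I_k, (a < b) ==> (idx a < idx b)],
      [forall a : 'I_k, forall b : 'I_k,
         (pi (idx a) < pi (idx b)) == (bv_sigma p a < bv_sigma p b)],
      [forall x in bv_X p, ext_pos idx x.+1 == (ext_pos idx x).+1] &
      [forall y in bv_Y p, ext_val pi idx y.+1 == (ext_val pi idx y).+1]].

Definition contains (pi : 'S_n) (p : bivinc k) : bool :=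
  [exists idx : {ffun 'I_k -> 'I_n}, occurrence pi p idx].

End Contain.

Definition avoid_count (n k : nat) (p : bivinc k) : nat :=
  #|[set pi : 'S_n | ~~ contains pi p]|.

(* the classical pattern 132, in 0-based values: 0 2 1 *)
Definition p132 : 'S_3 := tperm (inord 1 : 'I_3) (inord 2).

Definition pat (X Y : seq nat) : bivinc 3 :=
  BiVinc p132 [set x : 'I_4 | val x \in X] [set y : 'I_4 | val y \in Y].

(* Main.v *)
Require Import Defs.
From mathcomp Require Import all_boot all_fingroup.
From mathcomp Require Import zify.
Set Implicit Arguments. Unset Strict Implicit. Unset Printing Implicit Defensive.

Lemma cardlt N K : K <= N -> #|[set v : 'I_N | v < K]| = K.
Proof.
move=> hK.
have -> : [set v : 'I_N | v < K] = [set widen_ord hK i | i in 'I_K].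
  apply/setP => v; rewrite inE; apply/idP/imsetP.
  - by move=> vK; exists (Ordinal vK) => //; apply: val_inj.
  - by case=> i _ ->; rewrite /= ltn_ord.
rewrite card_imset ?card_ord //.
by move=> a b /(congr1 val) /= ab; apply: val_inj.
Qed.

Lemma restr_inj (T : finType) (h : {perm T}) (A : {set T}) :
  (forall x, (h x \in A) = (x \in A)) -> injective (fun x => if x \in A then h x else x).
Proof.
move=> hA x y /=.
case: ifP => xA; case: ifP => yA.
- exact: perm_inj.
- by move=> e; move: yA; rewrite -e hA xA.
- by move=> e; move: xA; rewrite e hA yA.
- by [].
Qed.

Lemma restr_on (T : finType) (h : {perm T}) (A : {set T}) (hA : forall x, (h x \in A) = (x \in A)) :
  perm_on A (perm (restr_inj hA)).
Proof.
apply/subsetP => x; rewrite inE permE /=.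
by case: ifP => //; rewrite eqxx.
Qed.

Definition Lset N (m : 'I_N) := [set x : 'I_N | x < m].
Definition Rset N (m : 'I_N) := [set x : 'I_N | m < x].

Lemma card_L N (m : 'I_N) : #|Lset m| = m.
Proof. by rewrite cardlt // ltnW. Qed.

Lemma card_R n' (m : 'I_n'.+1) : #|Rset m| = n' - m.
Proof.
have -> : Rset m = ~: [set x : 'I_n'.+1 | x < m.+1].
  by apply/setP => x; rewrite !inE ltnNge.
have := cardsC [set x : 'I_n'.+1 | x < m.+1].
rewrite cardlt ?ltn_ord // card_ord. lia.
Qed.

Definition Hset N (m : 'I_N) :=
  [set h : {perm 'I_N} | (h m == m) && [forall x, (h x < m) == (x < m)]].

Lemma card_H n' (m : 'I_n'.+1) : #|Hset m| = m`! * (n' - m)`!.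
Proof.
set L := Lset m; set R := Rset m.
have LR x : x \in L -> x \notin R.
  by rewrite !inE => a; rewrite -leqNgt ltnW.
have mL : m \notin L by rewrite inE ltnn.
have mR : m \notin R by rewrite inE ltnn.
have -> : Hset m = [set (pq.1 * pq.2)%g | pq in setX [set p in perm_on L] [set q in perm_on R]].
  apply/setP => h; apply/idP/imsetP.
  - rewrite inE => /andP[/eqP hm /forallP hx].
    have hL x : (h x \in L) = (x \in L) by rewrite !inE (eqP (hx x)).
    have hR x : (h x \in R) = (x \in R).
      have e : (h x == m) = (x == m) by rewrite -{1}hm (inj_eq perm_inj).
      have e2 := eqP (hx x).
      rewrite !inE; move: e e2.
      case: (ltngtP (h x) m) => a; case: (ltngtP x m) => b //=.
      * by rewrite -!(inj_eq val_inj) /= b eqxx (gtn_eqF a).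
      * by rewrite -!(inj_eq val_inj) /= a eqxx (gtn_eqF b).
    exists (perm (restr_inj hL), perm (restr_inj hR)).
      by rewrite !inE /=; apply/andP; split; apply: restr_on.
    apply/permP => x; rewrite permM /= permE /= permE /=.
    case xL: (x \in L).
      by rewrite (negbTE (LR (h x) _)) // hL.
    case: ifP => // xR.
    have xm : x = m.
      apply: val_inj; move: xL xR; rewrite !inE /=; lia.
    by rewrite xm hm.
  - case=> [[p q]]; rewrite !inE /= => /andP[pL qR] ->.
    rewrite permM (out_perm pL mL) (out_perm qR mR) eqxx /=.
    apply/forallP => x; rewrite permM.
    case xL: (x \in L).
      have pxL : p x \in L by rewrite (perm_closed _ pL).
      by rewrite (out_perm qR (LR _ pxL)); move: pxL xL; rewrite !inE => -> ->.
    rewrite (out_perm pL (negbT xL)).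
    case xR: (x \in R).
      have : q x \in R by rewrite (perm_closed _ qR).
      by move: xL xR; rewrite !inE /= => -> b c; rewrite ltnNge (ltnW c).
    have xm : x = m by apply: val_inj; move: xL xR; rewrite !inE /=; lia.
    by rewrite xm (out_perm qR mR).
rewrite card_in_imset.
  by rewrite cardsX !cardsE !card_perm card_L card_R.
case=> [p q] [p' q']; rewrite !inE /= => /andP[pL qR] /andP[pL' qR'] e.
have E1 (a : {perm 'I_n'.+1}) b x : perm_on L a -> perm_on R b -> x \in L -> (a * b)%g x = a x.
  by move=> aL bR xL; rewrite permM (out_perm bR) // LR // (perm_closed _ aL).
have E2 (a : {perm 'I_n'.+1}) b x : perm_on L a -> perm_on R b -> x \in R -> (a * b)%g x = b x.
  move=> aL bR xR; rewrite permM (out_perm aL) //.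
  by apply/negP => /LR; rewrite xR.
congr (_, _); apply/permP => x.
- case xL: (x \in L); last by rewrite (out_perm pL) ?xL // (out_perm pL') ?xL.
  by rewrite -(E1 _ _ _ pL qR xL) -(E1 _ _ _ pL' qR' xL) e.
- case xR: (x \in R); last by rewrite (out_perm qR) ?xR // (out_perm qR') ?xR.
  by rewrite -(E2 _ _ _ pL qR xR) -(E2 _ _ _ pL' qR' xR) e.
Qed.

Definition s0f n' (m : 'I_n'.+1) (x : 'I_n'.+1) : nat :=
  if x < m then x + (n' - m) else if x == m :> nat then n' else x - m.+1.

Lemma s0f_lt n' (m : 'I_n'.+1) x : s0f m x < n'.+1.
Proof. have := ltn_ord x; have := ltn_ord m; rewrite /s0f; case: (ltnP x m) => ?; [|case: (@eqP nat x m) => ?]; lia. Qed.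

Lemma s0_inj n' (m : 'I_n'.+1) : injective (fun x => inord (s0f m x) : 'I_n'.+1).
Proof.
move=> x y /(congr1 val) /=; rewrite !inordK ?s0f_lt // => e.
apply: ord_inj; move: e; have := ltn_ord x; have := ltn_ord y; have := ltn_ord m.
rewrite /s0f; case: (ltnP x m) => ?; try case: (@eqP nat x m) => ?; case: (ltnP y m) => ?; try case: (@eqP nat y m) => ?; lia.
Qed.

Definition s0 n' (m : 'I_n'.+1) : {perm 'I_n'.+1} := perm (@s0_inj n' m).

Lemma s0E n' (m : 'I_n'.+1) x : val (s0 m x) = s0f m x.
Proof. by rewrite /s0 permE /= inordK // s0f_lt. Qed.

Lemma s0m n' (m : 'I_n'.+1) : s0 m m = ord_max.
Proof. by apply: val_inj; rewrite s0E /s0f ltnn eqxx. Qed.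

Lemma s0blk n' (m : 'I_n'.+1) x : (n' - m <= s0 m x < n') = (x < m).
Proof.
rewrite s0E /s0f; have := ltn_ord x; have := ltn_ord m.
case: ifP => a; first by move=> *; apply/andP; split; lia.
case: ifP => /eqP b; first by rewrite ltnn andbF.
move=> *; apply/negbTE; rewrite negb_and -!ltnNge; apply/orP; left; lia.
Qed.

Definition Sset n' (m : 'I_n'.+1) :=
  [set pi : {perm 'I_n'.+1} | (pi m == ord_max) &&
     [forall x, (n' - m <= pi x < n') == (x < m)]].

Lemma card_S n' (m : 'I_n'.+1) : #|Sset m| = m`! * (n' - m)`!.
Proof.
rewrite -card_H.
have -> : Sset m = [set (h * s0 m)%g | h in Hset m].
  apply/setP => pi; apply/idP/imsetP.
  - rewrite inE => /andP[/eqP pm /forallP px].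
    exists (pi * (s0 m)^-1)%g; last by rewrite mulgKV.
    rewrite inE permM pm -(s0m m) permK eqxx /=.
    apply/forallP => x; rewrite permM -(s0blk m ((s0 m)^-1%g (pi x))) permKV.
    exact: px.
  - case=> h; rewrite inE => /andP[/eqP hm /forallP hx] ->.
    rewrite inE !permM hm s0m eqxx /=.
    apply/forallP => x; rewrite permM; have := s0blk m (h x); move=> ->; exact: hx.
by rewrite card_imset //; apply: mulIg.
Qed.

Lemma pi_ne_max n' (m : 'I_n'.+1) (pi : {perm 'I_n'.+1}) x :
  pi m = ord_max -> x != m -> pi x < n'.
Proof.
move=> pm xm; have := ltn_ord (pi x); rewrite ltnS leq_eqVlt => /orP[|//].
move=> /eqP e; exfalso; move/negP: xm; apply; apply/eqP; apply: (@perm_inj _ pi).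
by rewrite pm; apply: val_inj.
Qed.

Lemma av_block n' (m : 'I_n'.+1) (pi : {perm 'I_n'.+1}) : pi m = ord_max ->
  (forall i l : 'I_n'.+1, i < m -> m < l -> pi l < pi i) <->
  (forall x, (n' - m <= pi x < n') = (x < m)).
Proof.
move=> pm; split.
- move=> H.
  set W := [set y : 'I_n'.+1 | pi y < n' - m].
  have cW : #|W| = n' - m.
    have -> : W = pi @^-1: [set v : 'I_n'.+1 | v < n' - m].
      by apply/setP => y; rewrite !inE.
    by rewrite card_preimset ?cardlt //; [lia | apply: perm_inj].
  move=> x.
  case: (ltngtP x m) => xm.
  + have xm' : x != m by rewrite -(inj_eq val_inj) /= ltn_eqF.
    have := pi_ne_max pm xm' => -> ; rewrite andbT.
    apply/negbNE/negP; rewrite -ltnNge => lt.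
    have : #|x |: Rset m| <= #|W|.
      apply: subset_leq_card; apply/subsetP => y; rewrite !inE => /orP[/eqP ->//|my].
      by have := H x y xm my; lia.
    rewrite cardsU1 card_R cW inE ltnNge (ltnW xm) /=; lia.
  + have xm' : x != m by rewrite -(inj_eq val_inj) /= gtn_eqF.
    apply/negP => /andP[le lt].
    have : #|x |: (m |: Lset m)| <= #|~: W|.
      apply: subset_leq_card; apply/subsetP => y.
      rewrite !inE -leqNgt => /orP[/eqP ->//|/orP[/eqP ->|ym]].
        by rewrite pm /=; lia.
      by have := H y x ym xm; lia.
    have cW' : #|~: W| = m.+1.
      by have := cardsC W; rewrite cW card_ord; have := ltn_ord m; lia.
    rewrite cW' !cardsU1 card_L !inE ltnn /= (negbTE xm') ltnNge (ltnW xm) /=; lia.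
  + have -> : x = m by apply: val_inj.
    by rewrite pm /= ltnn andbF.
- move=> H i l im ml.
  have hi : n' - m <= pi i < n' by rewrite H.
  have hl : ~~ (n' - m <= pi l < n') by rewrite H -leqNgt ltnW.
  have lm : l != m by rewrite -(inj_eq val_inj) /= gtn_eqF.
  have := pi_ne_max pm lm; move: hi hl => /andP[a b]; rewrite negb_and -!ltnNge.
  move=> /orP[|]; lia.
Qed.

Definition av3 n' (pi : {perm 'I_n'.+1}) :=
  [forall i : 'I_n'.+1, forall j : 'I_n'.+1, forall l : 'I_n'.+1,
     [&& i < j, j < l & pi j == ord_max] ==> (pi l < pi i)].

Lemma card_av n' : #|[set pi : {perm 'I_n'.+1} | av3 pi]| = \sum_(m < n'.+1) m`! * (n'-m)`!.
Proof.
rewrite -sum1_card (partition_big (fun pi : {perm 'I_n'.+1} => (pi^-1)%g ord_max) xpredT) //=.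
apply: eq_bigr => m _; rewrite -card_S -sum1_card; apply: eq_bigl => pi.
rewrite !inE.
have E : ((pi^-1)%g ord_max == m) = (pi m == ord_max).
  apply/eqP/eqP => [<-|<-]; [exact: permKV | exact: permK].
rewrite E; case pm: (pi m == ord_max); rewrite ?andbF //= andbT.
move/eqP: pm => pm.
have := av_block pm => -[F G].
apply/idP/idP.
- move=> /forallP av; apply/forallP => x; apply/eqP; apply: F => i l im ml.
  by have := av i; move=> /forallP /(_ m) /forallP /(_ l); rewrite im ml pm eqxx /=; apply.
- move=> /forallP bl; apply/forallP => i; apply/forallP => j; apply/forallP => l.
  apply/implyP => /and3P[ij jl /eqP pj].
  have jm : j = m by apply: (@perm_inj _ pi); rewrite pj pm.
  subst j; apply: (G _ i l ij jl) => x; exact/eqP.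
Qed.

Notation o0 := (@Ordinal 3 0 isT).
Notation o1 := (@Ordinal 3 1 isT).
Notation o2 := (@Ordinal 3 2 isT).

Lemma forall3 (P : pred 'I_3) : [forall a, P a] = [&& P o0, P o1 & P o2].
Proof.
apply/forallP/and3P => [H|[H0 H1 H2] [[|[|[|k]]] Hk]]; first by split; apply: H.
- by have -> : Ordinal Hk = o0 by apply: val_inj.
- by have -> : Ordinal Hk = o1 by apply: val_inj.
- by have -> : Ordinal Hk = o2 by apply: val_inj.
- by [].
Qed.

Lemma forall4 (P : pred 'I_4) : [forall a, P a] =
  [&& P (@Ordinal 4 0 isT), P (@Ordinal 4 1 isT), P (@Ordinal 4 2 isT) & P (@Ordinal 4 3 isT)].
Proof.
apply/forallP/and4P => [H|[H0 H1 H2 H3] [[|[|[|[|k]]]] Hk]]; first by split; apply: H.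
- by have -> : Ordinal Hk = (@Ordinal 4 0 isT) by apply: val_inj.
- by have -> : Ordinal Hk = (@Ordinal 4 1 isT) by apply: val_inj.
- by have -> : Ordinal Hk = (@Ordinal 4 2 isT) by apply: val_inj.
- by have -> : Ordinal Hk = (@Ordinal 4 3 isT) by apply: val_inj.
- by [].
Qed.

Lemma enum3 : enum 'I_3 = [:: o0; o1; o2].
Proof. by apply: (inj_map val_inj); rewrite val_enum_ord. Qed.

Lemma p132E : [/\ p132 o0 = o0, p132 o1 = o2 & p132 o2 = o1].
Proof.
have i1 : (inord 1 : 'I_3) = o1 by apply: val_inj; rewrite /= inordK.
have i2 : (inord 2 : 'I_3) = o2 by apply: val_inj; rewrite /= inordK.
rewrite /p132 i1 i2 tpermL tpermR tpermD //.
Qed.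

Definition ev n (pi : 'S_n) (idx : 'I_3 -> 'I_n) (y : nat) : nat :=
  if y == 0 then 0 else if y == 1 then (pi (idx o0)).+1
  else if y == 2 then (pi (idx o2)).+1 else if y == 3 then (pi (idx o1)).+1 else n.+1.

Lemma occ_core n (pi : 'S_n) (Y : seq nat) (idx : 'I_3 -> 'I_n) :
  occurrence pi (pat [::] Y) idx =
  [&& idx o0 < idx o1, idx o1 < idx o2, pi (idx o0) < pi (idx o2), pi (idx o2) < pi (idx o1) &
      [forall y in [set y : 'I_4 | val y \in Y], ev pi idx y.+1 == (ev pi idx y).+1]].
Proof.
rewrite /occurrence /=.
have -> : [forall x in [set x : 'I_4 | val x \in [::]], ext_pos idx x.+1 == (ext_pos idx x).+1].
  by apply/forall_inP => x; rewrite inE.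
rewrite /= !forall3 /=.
case: p132E => -> -> ->.
rewrite /= !ltnn /= !eqxx !eqb_id !eqbF_neg /= !andbT.
case: (ltnP (idx o0) (idx o1)) => a /=; last by [].
case: (ltnP (idx o1) (idx o2)) => b /=; last by rewrite andbF.
rewrite (ltn_trans a b) /=.
case: (ltnP (pi (idx o0)) (pi (idx o2))) => c /=; last by rewrite !andbF.
case: (ltnP (pi (idx o2)) (pi (idx o1))) => d /=; last by rewrite ?andbF.
rewrite (ltn_trans c d) -!leqNgt (ltnW c) (ltnW d) (ltnW (ltn_trans c d)) /=.
apply: eq_forallb => y; congr (_ ==> _).
have E : sort leq [seq (nat_of_ord (pi (idx a))).+1 | a <- enum 'I_3] =
         [:: (pi (idx o0)).+1; (pi (idx o2)).+1; (pi (idx o1)).+1].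
  apply: (sorted_eq leq_trans anti_leq (sort_sorted leq_total _)).
    by rewrite /= !ltnS (ltnW c) (ltnW d).
  rewrite perm_sort enum3 /= perm_cons.
  by apply/seq.permP => f /=; rewrite !addn0 addnC.
have Ev z : z <= 4 -> ext_val pi idx z = ev pi idx z.
  rewrite /ext_val E /ev.
  by case: z => [|[|[|[|[|z]]]]].
have hy := ltn_ord y.
by rewrite !Ev // ltnW.
Qed.

Lemma Y3 n (pi : 'S_n) (idx : 'I_3 -> 'I_n) :
  [forall y in [set y : 'I_4 | val y \in [:: 3]], ev pi idx y.+1 == (ev pi idx y).+1]
  = ((pi (idx o1)).+1 == n).
Proof. by rewrite forall4 /= !inE /= /ev /= eqSS eq_sym. Qed.

Lemma Y13 n (pi : 'S_n) (idx : 'I_3 -> 'I_n) :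
  [forall y in [set y : 'I_4 | val y \in [:: 1; 3]], ev pi idx y.+1 == (ev pi idx y).+1]
  = ((pi (idx o2) : nat) == (pi (idx o0)).+1) && ((pi (idx o1)).+1 == n).
Proof. by rewrite forall4 /= !inE /= /ev /= !eqSS [n == _]eq_sym. Qed.

Definition mkidx n (i j l : 'I_n) : {ffun 'I_3 -> 'I_n} :=
  [ffun a => if a == o0 then i else if a == o1 then j else l].

Lemma mkidxE n (i j l : 'I_n) : [/\ mkidx i j l o0 = i, mkidx i j l o1 = j & mkidx i j l o2 = l].
Proof. by rewrite !ffunE. Qed.

Lemma maxE n' (x : 'I_n'.+1) : (x.+1 == n'.+1) = (x == ord_max).
Proof. by rewrite eqSS -(inj_eq val_inj). Qed.

Lemma contains3E n' (pi : 'S_n'.+1) : contains pi (pat [::] [:: 3]) = ~~ av3 pi.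
Proof.
apply/existsP/idP.
- case=> idx; rewrite occ_core Y3 => /and5P[a b c d].
  rewrite maxE => e; apply/negP => /forallP /(_ (idx o0)) /forallP /(_ (idx o1))
    /forallP /(_ (idx o2)); rewrite a b e /= => f; lia.
- move/forallPn => [i /forallPn [j /forallPn [l]]].
  rewrite negb_imply => /andP[/and3P[ij jl /eqP pj] nlt].
  exists (mkidx i j l); rewrite occ_core Y3; case: (mkidxE i j l) => -> -> ->.
  rewrite ij jl pj maxE eqxx /= andbT.
  have li : l != i by rewrite -(inj_eq val_inj) /= gtn_eqF // (ltn_trans ij jl).
  have lj : l != j by rewrite -(inj_eq val_inj) /= gtn_eqF.
  have h1 : pi l != pi i by rewrite (inj_eq perm_inj).
  have h2 : pi l != pi j by rewrite (inj_eq perm_inj).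
  rewrite pj in h2.
  have := ltn_ord (pi l); move: h1 h2 nlt; rewrite -!(inj_eq val_inj) /=.
  move=> h1 h2 nlt hl; apply/andP; split; lia.
Qed.

Lemma ivt (P : pred nat) a b : a <= b -> P a -> ~~ P b ->
  exists v, [/\ a <= v, v < b, P v & ~~ P v.+1].
Proof.
elim: b => [|b IH] ab Pa Pb.
  by move: ab; rewrite leqn0 => /eqP e; rewrite -e Pa in Pb.
case Pb': (P b).
  by exists b; split => //; move: ab; rewrite leq_eqVlt => /orP[/eqP e|]; [rewrite -e Pa in Pb|].
have ab' : a <= b.
  by move: ab; rewrite leq_eqVlt => /orP[/eqP e|//]; rewrite -e Pa in Pb.
have [v [? ? ? ?]] := IH ab' Pa (negbT Pb').
by exists v; split => //; rewrite ltnS ltnW.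
Qed.

Lemma contains13E n' (pi : 'S_n'.+1) :
  contains pi (pat [::] [:: 1; 3]) = contains pi (pat [::] [:: 3]).
Proof.
apply/existsP/existsP.
- case=> idx; rewrite occ_core Y13 => /and5P[a b c d /andP[_ e]].
  by exists idx; rewrite occ_core Y3 a b c d e.
- case=> idx; rewrite occ_core Y3 => /and5P[a b c d].
  rewrite maxE => /eqP e.
  set i := idx o0 in a c *; set j := idx o1 in a b d e *; set l := idx o2 in b c d *.
  pose P := fun v : nat => ((pi^-1)%g (inord v) : nat) < j.
  have iv (x : 'I_n'.+1) : (pi^-1)%g (inord (pi x)) = x.
    by rewrite inord_val permK.
  have [v [v1 v2 Pv Pv1]] : exists v, [/\ pi i <= v, v < pi l, P v & ~~ P v.+1].
    apply: ivt; first exact: ltnW.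
      by rewrite /P iv.
    by rewrite /P iv -leqNgt ltnW.
  have vl : v.+1 <= n'.
    by have := ltn_ord (pi l); move: d; rewrite e /=; lia.
  set i' := (pi^-1)%g (inord v); set l' := (pi^-1)%g (inord v.+1).
  have pi' : (pi i' : nat) = v by rewrite /i' permKV inordK //; lia.
  have pl' : (pi l' : nat) = v.+1 by rewrite /l' permKV inordK //; lia.
  exists (mkidx i' j l'); rewrite occ_core Y13; case: (mkidxE i' j l') => -> -> ->.
  rewrite pi' pl' e maxE eqxx /= eqxx /= andbT.
  have jl' : j < l'.
    have Pv1' : ~~ (l' < j) := Pv1.
    rewrite ltn_neqAle leqNgt Pv1' andbT.
    apply/negP => /eqP/val_inj jl; move: pl' v2 d; rewrite -jl e /=; lia.
  have Pv' : i' < j := Pv.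
  rewrite Pv' jl' /= ltnSn /=; move: v2 d; rewrite e /=; lia.
Qed.

Lemma sum_conv n' : \sum_(m < n'.+1) m`! * (n' - m)`! =
  \sum_(1 <= k < n'.+2) (k.-1)`! * (n'.+1 - k)`!.
Proof. by rewrite big_add1 /= big_mkord; apply: eq_bigr => k _; rewrite subSS. Qed.

Lemma count3 n' : avoid_count n'.+1 (pat [::] [:: 3]) =
  \sum_(1 <= k < n'.+2) (k.-1)`! * (n'.+1 - k)`!.
Proof.
rewrite -sum_conv -card_av /avoid_count; apply: eq_card => pi.
by rewrite !inE contains3E negbK.
Qed.

Theorem mainTheorem8 (n : nat) : 0 < n ->
  avoid_count n (pat [::] [:: 3]) = \sum_(1 <= k < n.+1) (k.-1)`! * (n - k)`! /\
  avoid_count n (pat [::] [:: 1; 3]) = \sum_(1 <= k < n.+1) (k.-1)`! * (n - k)`!.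
Proof.
case: n => [//|n'] _; split; first exact: count3.
rewrite -count3 /avoid_count; apply: eq_card => pi.
by rewrite !inE contains13E.
Qed.
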